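(* Let $(\Gamma,d)=(H,\iota,\sigma,m,d)$ be a $\mathbb{Z}/\overline m\mathbb{Z}$-graded Brauer graph and $H'\subseteq H$ stable under $\iota$. Let $\Gamma_d=(H_d,\iota_d,\sigma_d)$ be the Galois covering of $(\Gamma,d)$ and $H'_d=H'\times\mathbb{Z}/\overline m\mathbb{Z}\subseteq H_d$. Then the Galois covering of the graded Brauer graph $\mu^+_{H'}(\Gamma,d)$ is the Brauer graph $\mu^+_{H'_d}(\Gamma_d)$.
   Context: Brauer graph $\Gamma=(H,\iota,\sigma,m)$: $H$ finite, $\iota$ fixed-point-free involution, $\sigma$ a permutation, $m:H\to\mathbb{Z}_{>0}$ constant on $\sigma$-orbits; $\overline m=\mathrm{lcm}\{m(h)\}$. A grading $d:H\to\mathbb{Z}/\overline m\mathbb{Z}$ is admissible if for each $\sigma$-orbit $v$, $\sum_{h\in v}d(h)=\overline m/\widetilde m(v)$ with $\widetilde m(v)$ the value of $m$ on $v$; then $(\Gamma,d)$ is a graded Brauer graph. Its Galois covering is the Brauer graph (multiplicity identically $1$) $\Gamma_d$ with $H_d=H\times\mathbb{Z}/\overline m\mathbb{Z}$ (elements $h_i$), $\iota_d(h_i)=(\iota h)_i$, $\sigma_d(h_i)=(\sigma h)_{i+d(h)}$. Sectors: for $H'$ stable under $\iota$, $(h,r)\in H\times\mathbb{Z}_{\ge0}$ is a sector of elements of $H'$ if $r+1$ is the least $r'\ge0$ with $\sigma^{r'}h\notin H'$, maximal if also $\sigma^{-1}h\notin H'$. Ungraded move: $\mu^+_{(h,r)}(\Gamma)=(H,\iota,\sigma_{(h,r)},m_{(h,r)})$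 with $\sigma_{(h,r)}=(h\ \ \sigma^{r+1}h)\circ\sigma\circ(\sigma^rh\ \ \iota\sigma^{r+1}h)$ (applied right to left), $m_{(h,r)}(\sigma^ih)=m(\iota\sigma^{r+1}h)$ for $0\le i\le r$, $m_{(h,r)}=m$ otherwise. Graded move: $\mu^+_{(h,r)}(\Gamma,d)$ additionally carries $d_{(h,r)}$: $d_{(h,r)}(\iota\sigma^{r+1}h)=-\sum_{i=0}^rd(\sigma^ih)$; $d_{(h,r)}(\sigma^rh)=d(\iota\sigma^{r+1}h)+d(\sigma^rh)$ if $\iota\sigma^{r+1}h\neq\sigma^{-1}h$, else $\sum_{i=-1}^rd(\sigma^ih)+d(\sigma^rh)$; $d_{(h,r)}(\sigma^{-1}h)=\sum_{i=-1}^rd(\sigma^ih)$ if $\iota\sigma^{r+1}h\ne\sigma^{-1}h$, else $-\sum_{i=0}^rd(\sigma^ih)$; $d_{(h,r)}=d$ elsewhere; it is again admissible, with the same $\overline m$. The (graded) generalized Kauer move $\mu^+_{H'}$ is the succession of the (graded) moves of all maximal sectors of elements of $H'$ (independent of order). The Galois covering of $\mu^+_{H'}(\Gamma,d)=(H,\iota,\sigma_{H'},m_{H'},d_{H'})$ is formed with respect to $d_{H'}$. *)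

(* Defs.v *)
From HB Require Import structures.
From mathcomp Require Import all_boot all_order all_fingroup all_algebra.
Set Implicit Arguments. Unset Strict Implicit. Unset Printing Implicit Defensive.
Import GRing.Theory.
Local Open Scope ring_scope.

(* Z/nZ for n >= 1 (the only case used: n = mbar >= 1).
   'I_(n.-1).+1 carries the canonical additive group structure of Z/nZ. *)
Notation "''Zm' n" := ('I_(n.-1).+1) (at level 8, n at level 2, format "''Zm' n").

Section BrauerGraphs.
Variable H : finType.

Record bgraph := BG { bg_iota : {perm H}; bg_sigma : {perm H}; bg_mult : H -> nat }.

Definition is_bgraph (G : bgraph) : Prop :=
  [/\ (forall h, bg_iota G (bg_iota G h) = h),
      (forall h, bg_iota G h <> h),
      (forall h, (0 < bg_mult G h)%N) &
      (forall h, bg_mult G (bg_sigma G h) = bg_mult G h)].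

Definition mbar (m : H -> nat) : nat := \big[lcmn/1%N]_(h : H) m h.

Record gbgraph (n : nat) := GBG
  { gb_iota : {perm H}; gb_sigma : {perm H}; gb_mult : H -> nat; gb_deg : H -> 'Zm n }.

Definition underlying n (G : gbgraph n) : bgraph := BG (gb_iota G) (gb_sigma G) (gb_mult G).

Definition admissible n (G : gbgraph n) : Prop :=
  forall h : H, \sum_(x in porbit (gb_sigma G) h) gb_deg G x
                = inZp (n %/ gb_mult G h)%N :> 'Zm n.

Definition is_gbgraph n (G : gbgraph n) : Prop :=
  [/\ is_bgraph (underlying G), n = mbar (gb_mult G) & admissible G].

Definition spow (s : {perm H}) (i : nat) (h : H) : H := iter i (fun x => s x) h.

Definition is_sector (H' : {set H}) (s : {perm H}) (h : H) (r : nat) : bool :=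
  [forall i : 'I_r.+1, spow s i h \in H'] && (spow s r.+1 h \notin H').

Definition is_max_sector (H' : {set H}) (s : {perm H}) (h : H) (r : nat) : bool :=
  is_sector H' s h r && ((s^-1)%g h \notin H').

(* The list of all maximal sectors (a sector (h,r) always has r < #|H|),
   enumerated in the canonical order of the finType H. *)
Definition max_sectors (H' : {set H}) (s : {perm H}) : seq (H * nat) :=
  [seq p <- [seq (h, r) | h <- enum H, r <- iota 0 #|H|] | is_max_sector H' s p.1 p.2].

Definition move_sigma (io s : {perm H}) (h : H) (r : nat) : {perm H} :=
  (* (h  s^{r+1}h) o s o (s^r h  io s^{r+1} h), applied right to left;
     in mathcomp (p * q) x = q (p x) *)
  (tperm (spow s r h) (io (spow s r.+1 h)) * s * tperm h (spow s r.+1 h))%g.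

Definition move_mult (io s : {perm H}) (m : H -> nat) (h : H) (r : nat) : H -> nat :=
  fun x => if [exists i : 'I_r.+1, x == spow s i h] then m (io (spow s r.+1 h)) else m x.

Definition move (G : bgraph) (p : H * nat) : bgraph :=
  BG (bg_iota G) (move_sigma (bg_iota G) (bg_sigma G) p.1 p.2)
     (move_mult (bg_iota G) (bg_sigma G) (bg_mult G) p.1 p.2).

Definition move_deg n (io s : {perm H}) (d : H -> 'Zm n) (h : H) (r : nat) : H -> 'Zm n :=
  let S := \sum_(i < r.+1) d (spow s i h) in
  let a := spow s r h in
  let b := io (spow s r.+1 h) in
  let c := (s^-1)%g h in
  fun x =>
    if x == b then - S
    else if x == a then (if b != c then d b + d a else (d c + S) + d a)
    else if x == c then (if b != c then d c + S else - S)
    else d x.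

Definition gmove n (G : gbgraph n) (p : H * nat) : gbgraph n :=
  GBG (gb_iota G) (move_sigma (gb_iota G) (gb_sigma G) p.1 p.2)
      (move_mult (gb_iota G) (gb_sigma G) (gb_mult G) p.1 p.2)
      (move_deg (gb_iota G) (gb_sigma G) (gb_deg G) p.1 p.2).

(* generalized Kauer moves mu^+_{H'}: succession of the moves of all maximal
   sectors of elements of H' (sectors taken in the original graph). *)
Definition kauer (H' : {set H}) (G : bgraph) : bgraph :=
  foldl move G (max_sectors H' (bg_sigma G)).

Definition gkauer (H' : {set H}) n (G : gbgraph n) : gbgraph n :=
  foldl (@gmove n) G (max_sectors H' (gb_sigma G)).

End BrauerGraphs.

Section Covering.
Variables (H : finType) (n : nat).

Definition cov_iota_fun (io : {perm H}) (x : H * 'Zm n) : H * 'Zm n := (io x.1, x.2).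
Definition cov_sigma_fun (s : {perm H}) (d : H -> 'Zm n) (x : H * 'Zm n) : H * 'Zm n :=
  (s x.1, x.2 + d x.1).

Lemma cov_iota_inj io : injective (cov_iota_fun io).
Proof. by move=> [h i] [h' i'] [/perm_inj -> ->]. Qed.

Lemma cov_sigma_inj s d : injective (cov_sigma_fun s d).
Proof.
move=> [h i] [h' i'] E.
have /= /perm_inj eh := f_equal fst E; subst h'.
have /= /addIr -> := f_equal snd E; by [].
Qed.

Definition cov_iota io : {perm H * 'Zm n} := perm (@cov_iota_inj io).
Definition cov_sigma s d : {perm H * 'Zm n} := perm (@cov_sigma_inj s d).

Definition covering (G : gbgraph H n) : bgraph (H * 'Zm n)%type :=
  BG (cov_iota (gb_iota G)) (cov_sigma (gb_sigma G) (gb_deg G)) (fun _ => 1%N).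

Definition lift_set (H' : {set H}) : {set H * 'Zm n} := [set x | x.1 \in H'].

End Covering.

(* Main.v *)
Require Import Defs.
From HB Require Import structures.
From mathcomp Require Import all_boot all_order all_fingroup all_algebra.
From mathcomp Require Import zify.
From Stdlib Require Import FunctionalExtensionality.
Set Implicit Arguments. Unset Strict Implicit. Unset Printing Implicit Defensive.
Import GRing.Theory.

Section Tprod.
Variable T : finType.
Definition tprod (ps : seq (T * T)) : {perm T} :=
  foldr (fun p acc => tperm p.1 p.2 * acc)%g 1%g ps.
Definition pdisj (p q : T * T) :=
  [&& p.1 != q.1, p.1 != q.2, p.2 != q.1 & p.2 != q.2].
Definition good ps := pairwise pdisj ps && all (fun p => p.1 != p.2) ps.

Lemma tprod_cat xs ys : tprod (xs ++ ys) = (tprod xs * tprod ys)%g.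
Proof. by elim: xs => [|p xs IH] /=; rewrite ?mul1g // IH mulgA. Qed.

Lemma tprod_out ps x : (forall p, p \in ps -> (x != p.1) && (x != p.2)) ->
  tprod ps x = x.
Proof.
elim: ps => [|p ps IH] H /=; first by rewrite perm1.
case/andP: (H p (mem_head _ _)) => a b.
rewrite permM tpermD; try by rewrite eq_sym.
by apply: IH => q Hq; apply: H; rewrite in_cons Hq orbT.
Qed.

Lemma tprod_fst ps x y : good ps -> (x, y) \in ps -> tprod ps x = y /\ tprod ps y = x.
Proof.
elim: ps => [|p ps IH] //= /andP[/andP[Hp Hps] /andP[Hn Ha]].
rewrite in_cons => /orP[/eqP E|Hin]; rewrite !permM.
  subst p => /=; rewrite tpermL tpermR; split; apply: tprod_out => q Hq;
  by move/allP: Hp => /(_ q Hq) /and4P[? ? ? ?]; apply/andP.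
have /and4P[a1 a2 a3 a4] := allP Hp _ Hin.
rewrite !tpermD //; try by rewrite eq_sym.
by apply: IH => //; apply/andP.
Qed.

Lemma good_of ps : uniq ps -> {in ps &, forall p q, p != q -> pdisj p q} ->
  (forall p, p \in ps -> p.1 != p.2) -> good ps.
Proof.
move=> U D N; rewrite /good; apply/andP; split; last by apply/allP => p /N.
move: U; rewrite uniq_pairwise; apply: (@sub_in_pairwise _ (mem ps)).
  by move=> p q Hp Hq /= ne; exact: D.
by apply/allP.
Qed.

Lemma tprod_eq ps1 ps2 : good ps1 -> good ps2 -> ps1 =i ps2 -> tprod ps1 =1 tprod ps2.
Proof.
move=> G1 G2 E z.
case: (boolP [exists w, (z, w) \in ps1]) => [/existsP[w Hw]|N1].
  by rewrite (proj1 (tprod_fst G1 Hw)) (proj1 (tprod_fst G2 (_ : (z, w) \in ps2))) // -E.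
case: (boolP [exists w, (w, z) \in ps1]) => [/existsP[w Hw]|N2].
  by rewrite (proj2 (tprod_fst G1 Hw)) (proj2 (tprod_fst G2 (_ : (w, z) \in ps2))) // -E.
have K : forall ps : seq (T * T), (forall x, (x \in ps) = (x \in ps1)) -> forall p, p \in ps -> (z != p.1) && (z != p.2).
  move=> ps Eps [p1 p2] Hp /=; apply/andP; split; apply/negP => /eqP Ez; subst z.
    by move/existsP: N1; apply; exists p2; rewrite -Eps.
  by move/existsP: N2; apply; exists p1; rewrite -Eps.
by rewrite !tprod_out //; apply: K => //; move=> x; rewrite E.
Qed.
End Tprod.

Section Sectors.
Variables (T : finType) (P : {set T}) (s : {perm T}).

Lemma spowS k x : spow s k.+1 x = s (spow s k x). Proof. by []. Qed.
Lemma spowD i j x : spow s (i + j) x = spow s i (spow s j x).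
Proof. exact: iterD. Qed.
Lemma spow_inj k : injective (spow s k).
Proof. elim: k => [|k IH] x y //= /perm_inj; exact: IH. Qed.

Lemma sector_in h r k : is_sector P s h r -> k <= r -> spow s k h \in P.
Proof. by case/andP=> /forallP H _ kr; exact: (H (Ordinal (kr : k < r.+1))). Qed.
Lemma sector_out h r : is_sector P s h r -> spow s r.+1 h \notin P.
Proof. by case/andP. Qed.

Lemma sector_inj h r i j : is_sector P s h r -> i <= r.+1 -> j <= r.+1 ->
  spow s i h = spow s j h -> i = j.
Proof.
move=> S.
wlog lt : i j / i <= j.
  move=> W ir jr E; case: (leqP i j) => ij; first exact: W.
  by symmetry; apply: W => //; apply: ltnW.
move=> ir jr E; case: (ltngtP i j) => ij; [|lia|done].
have: spow s (r.+1 - j + i) h \in P by apply: (sector_in S); lia.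
rewrite spowD E -spowD subnK ?(negbTE (sector_out S)) //; lia.
Qed.

Lemma sector_r h r r' : is_sector P s h r -> is_sector P s h r' -> r = r'.
Proof.
move=> S S'; case: (ltngtP r r') => // lt.
  by have := sector_in S' lt; rewrite (negbTE (sector_out S)).
by have := sector_in S lt; rewrite (negbTE (sector_out S')).
Qed.

Lemma sector_lt_card h r : is_sector P s h r -> r < #|T|.
Proof.
move=> S.
have inj : injective (fun i : 'I_r.+2 => spow s i h).
  by move=> i j /(sector_inj S) E; apply/val_inj/E; rewrite -ltnS ltn_ord.
have := leq_card _ inj; rewrite card_ord; lia.
Qed.

Lemma mem_max_sectors p : (p \in max_sectors P s) = is_max_sector P s p.1 p.2.
Proof.
rewrite mem_filter; case: p => h r /=.
case M: (is_max_sector P s h r) => //=.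
apply: (allpairs_f (fun h r => (h, r))); first by rewrite mem_enum.
rewrite mem_iota /= add0n; apply: (sector_lt_card (h:=h)).
by case/andP: M.
Qed.

Lemma max_sectors_uniq : uniq (max_sectors P s).
Proof.
apply: filter_uniq; apply: allpairs_uniq; [exact: enum_uniq| exact: iota_uniq|].
by move=> [a b] [c d] _ _ /= [-> ->].
Qed.

Lemma max_disjoint h r h' r' i j : is_max_sector P s h r -> is_max_sector P s h' r' ->
  i <= r -> j <= r' -> spow s i h = spow s j h' -> h = h' /\ r = r'.
Proof.
wlog ij : h r h' r' i j / i <= j.
  move=> W M M' ir jr E; case: (leqP i j) => ij; first exact: (W h r h' r' i j ij M M' ir jr E).
  have [-> ->] := W h' r' h r j i (ltnW ij) M' M jr ir (esym E); done.
move=> /andP[S c] /andP[S' c'] ir jr E.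
case: (ltngtP i j) ij => // [lt|eq] _.
  have Eh : h = spow s (j - i) h'.
    by apply: (spow_inj (k:=i)); rewrite -spowD subnKC // ltnW.
  have : spow s (j - i).-1 h' \in P by apply: (sector_in S'); lia.
  have -> : spow s (j - i).-1 h' = (s^-1)%g h.
    by rewrite Eh -(prednK (_ : 0 < j - i)) ?subn_gt0 // spowS permK.
  by rewrite (negbTE c).
subst j; have Eh := spow_inj E; subst h'; split => //; exact: sector_r S S'.
Qed.
End Sectors.

Section Lift.
Variables (H : finType) (n : nat).
Local Open Scope ring_scope.
Local Notation csig := (@cov_sigma H n).
Local Notation ciota := (@cov_iota H n).

Definition Dsum (s : {perm H}) (d : H -> 'Zm n) h k : 'Zm n :=
  \sum_(j < k) d (spow s j h).

Lemma cov_sigmaE s d x : csig s d x = (s x.1, x.2 + d x.1).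
Proof. by rewrite /cov_sigma permE. Qed.
Lemma cov_iotaE io x : @cov_iota H n io x = (io x.1, x.2).
Proof. by rewrite /cov_iota permE. Qed.

Lemma cov_spow s d k h i :
  spow (csig s d) k (h, i) = (spow s k h, i + Dsum s d h k).
Proof.
elim: k => [|k IH]; first by rewrite /Dsum big_ord0 addr0.
by rewrite spowS IH cov_sigmaE /Dsum big_ord_recr /= addrA.
Qed.

Lemma cov_inv_fst s d x : (((csig s d)^-1)%g x).1 = (s^-1)%g x.1.
Proof.
set y := ((csig s d)^-1)%g x.
have : csig s d y = x by rewrite /y permKV.
rewrite cov_sigmaE => <- /=; by rewrite permK.
Qed.

Lemma lift_maxsec P s d h i r :
  is_max_sector (lift_set n P) (csig s d) (h, i) r = is_max_sector P s h r.
Proof.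
rewrite /is_max_sector /is_sector cov_spow !inE cov_inv_fst /=; congr (_ && _ && _).
by apply: eq_forallb => k; rewrite cov_spow inE.
Qed.

Definition tlist (x y : H) (f g : 'Zm n -> 'Zm n) :=
  [seq ((x, f i), (y, g i)) | i <- enum 'Zm n].

Lemma good_tlist x y f g : x != y -> injective f -> injective g -> good (tlist x y f g).
Proof.
move=> xy fi gi; apply: good_of.
- rewrite map_inj_uniq ?enum_uniq // => i j [] /fi //.
- move=> p q /mapP[i _ ->] /mapP[j _ ->] ne; rewrite /pdisj /=.
  have ij : i != j by apply: contraNneq ne => ->.
  rewrite !xpair_eqE (negbTE xy) (negbTE (_ : y != x)) ?eqxx /=; last by rewrite eq_sym.
  by rewrite (inj_eq fi) (inj_eq gi) ij.
- by move=> p /mapP[i _ ->] /=; rewrite xpair_eqE (negbTE xy).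
Qed.

Lemma tlist_fst x y f g i : x != y -> injective f -> injective g ->
  tprod (tlist x y f g) (x, f i) = (y, g i).
Proof.
move=> xy fi gi; apply: (proj1 (tprod_fst (good_tlist xy fi gi) _)).
by apply: map_f; rewrite mem_enum.
Qed.

Lemma tlist_snd x y f g i : x != y -> injective f -> injective g ->
  tprod (tlist x y f g) (y, g i) = (x, f i).
Proof.
move=> xy fi gi; apply: (proj2 (tprod_fst (good_tlist xy fi gi) _)).
by apply: map_f; rewrite mem_enum.
Qed.

Lemma tlist_out x y f g z : z.1 != x -> z.1 != y -> tprod (tlist x y f g) z = z.
Proof.
move=> zx zy; apply: tprod_out => p /mapP[i _ ->] /=.
by apply/andP; split; apply/eqP => E; [move: zx|move: zy]; rewrite E eqxx.
Qed.

Lemma addrI_inj (c : 'Zm n) : injective (fun i => i + c).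
Proof. exact: addIr. Qed.

Definition Xp (io s : {perm H}) (d : H -> 'Zm n) (h : H) (r : nat) :=
  tlist (spow s r h) (io (spow s r.+1 h)) (fun i => i + Dsum s d h r) (fun i => i + Dsum s d h r.+1).
Definition Yp (s : {perm H}) (d : H -> 'Zm n) (h : H) (r : nat) :=
  tlist h (spow s r.+1 h) id (fun i => i + Dsum s d h r.+1).

Lemma single_move (io s : {perm H}) (d : H -> 'Zm n) h r :
  spow s r h != io (spow s r.+1 h) -> h != spow s r.+1 h ->
  csig (move_sigma io s h r) (move_deg io s d h r) =
  (tprod (Xp io s d h r) * csig s d * tprod (Yp s d h r))%g.
Proof.
set a := spow s r h; set e := spow s r.+1 h; set b := io e.
move=> ab he; apply/permP => -[x j]; rewrite !permM cov_sigmaE /=.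
rewrite /move_sigma !permM /move_deg -/a -/e -/b.
set D := Dsum s d h r; set S := Dsum s d h r.+1.
have SD : S = D + d a by rewrite /S /D /Dsum big_ord_recr.
have ea : e = s a by [].
have inj1 : injective (fun i : 'Zm n => i + D) := @addIr _ D.
have inj2 : injective (fun i : 'Zm n => i + S) := @addIr _ S.
have Yout : forall z, z.1 != h -> z.1 != e -> tprod (Yp s d h r) z = z.
  by move=> z; apply: tlist_out.
rewrite /Xp /Yp -/a -/e -/b -/D -/S.
change (\sum_(i < r.+1) d (spow s i h)) with S.
case: (eqVneq x b) => [->|xb].
  rewrite tpermR -ea tpermR.
  have -> : (b, j) = (b, (j - S) + S) by rewrite subrK.
  rewrite tlist_snd // cov_sigmaE /= -ea.
  have -> : j - S + D + d a = j - S + S by rewrite SD addrA.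
  by rewrite tlist_snd // subrK.
case: (eqVneq x a) => [->|xa].
  rewrite tpermL.
  have -> : (a, j) = (a, (j - D) + D) by rewrite subrK.
  rewrite tlist_fst // cov_sigmaE /=.
  case: (eqVneq b ((s^-1)%g h)) => [Ebc|Nbc].
    have sb : s b = h by rewrite Ebc permKV.
    rewrite /= sb tpermL -Ebc.
    have -> : (h, j - D + S + d b) = (h, id (j - D + S + d b)) by [].
    rewrite tlist_fst //; congr pair; rewrite SD.
    have -> : j - D + (D + d a) = j + d a by rewrite addrA addrNK.
    by rewrite !addrA [j + d a + d b]addrAC [j + d b + d a + D]addrAC.
  have sbh : s b != h by apply: contraNneq Nbc => <-; rewrite permK.
  have sbe : s b != e by rewrite ea (inj_eq perm_inj) eq_sym.
  rewrite /= tpermD 1?eq_sym // Yout //= SD.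
  have -> : j - D + (D + d a) = j + d a by rewrite addrA addrNK.
  by rewrite addrA addrAC.
rewrite (tpermD (_ : a != x)) 1?eq_sym //.
rewrite (@tlist_out a b _ _ (x, j)) //= cov_sigmaE /=.
case: (eqVneq x ((s^-1)%g h)) => [Exc|Nxc].
  have sx : s x = h by rewrite Exc permKV.
  rewrite sx tpermL (negbTE (_ : b != (s^-1)%g h)) /=; last by rewrite -Exc eq_sym.
  have -> : (h, j + d x) = (h, id (j + d x)) by [].
  by rewrite tlist_fst // -Exc addrA.
have sxh : s x != h by apply: contraNneq Nxc => <-; rewrite permK.
have sxe : s x != e by rewrite ea (inj_eq perm_inj).
by rewrite tpermD 1?eq_sym // Yout.
Qed.
End Lift.

Section Fold.
Variables (T : finType) (P : {set T}) (io s : {perm T}).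

Definition XA (p : T * nat) := (spow s p.2 p.1, io (spow s p.2.+1 p.1)).
Definition YA (p : T * nat) := (p.1, spow s p.2.+1 p.1).

Lemma path_agree (s' : {perm T}) h r :
  (forall k, k <= r -> s' (spow s k h) = s (spow s k h)) ->
  forall k, k <= r.+1 -> spow s' k h = spow s k h.
Proof.
move=> A; elim=> [|k IH] // kr.
by rewrite !spowS IH ?A // ltnW.
Qed.

Lemma move_sigma_other (s' : {perm T}) h r y : y != spow s' r h ->
  y != io (spow s' r.+1 h) -> s' y != h -> move_sigma io s' h r y = s' y.
Proof.
move=> ya yb syh; rewrite /move_sigma !permM (tpermD (_ : spow s' r h != y)) 1?eq_sym //.
rewrite tpermD //; first by rewrite eq_sym.
by apply: contra ya => /eqP; rewrite spowS => /perm_inj ->.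
Qed.

Lemma move_deg_other n (s' : {perm T}) (d : T -> 'Zm n) h r y : y != spow s' r h ->
  y != io (spow s' r.+1 h) -> y != (s'^-1)%g h -> move_deg io s' d h r y = d y.
Proof. by move=> ya yb yc; rewrite /move_deg (negbTE ya) (negbTE yb) (negbTE yc). Qed.

Hypothesis Hio : forall x, (io x \in P) = (x \in P).

Definition sec_ok (L : seq (T * nat)) :=
  [/\ forall p, p \in L -> is_max_sector P s p.1 p.2, uniq L &
      {in L &, forall p q, forall i j, i <= p.2 -> j <= q.2 ->
         spow s i p.1 = spow s j q.1 -> p = q}].

Lemma sec_ok_cons p L : sec_ok (p :: L) -> sec_ok L.
Proof.
case=> A /andP[_ U] D; split => //.
  by move=> q Hq; apply: A; rewrite in_cons Hq orbT.
by move=> q q' Hq Hq'; apply: D; rewrite in_cons ?Hq ?Hq' orbT.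
Qed.

Lemma sec_avoid p L (s' : {perm T}) : sec_ok (p :: L) ->
  (forall k, k <= p.2 -> s' (spow s k p.1) = s (spow s k p.1)) ->
  forall q, q \in L -> forall k, k <= q.2 ->
  s' (spow s k q.1) = s (spow s k q.1) ->
  let y := spow s k q.1 in
  [/\ y != spow s' p.2 p.1, y != io (spow s' p.2.+1 p.1) & s' y != p.1].
Proof.
case=> A /andP[pL U] D Ap q Hq k kq Aq y.
have pin : p \in p :: L by rewrite mem_head.
have qin : q \in p :: L by rewrite in_cons Hq orbT.
have /andP[Sp cp] := A p pin.
have /andP[Sq cq] := A q qin.
have yP : y \in P by apply: (sector_in Sq).
rewrite !(path_agree Ap) //; split.
- apply/eqP => E; have pq := D q p qin pin k p.2 kq (leqnn _) E.
  by move: pL; rewrite -pq Hq.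
- apply/eqP => E; move: yP; rewrite E Hio.
  by rewrite (negbTE (sector_out Sp)).
- rewrite Aq; apply/eqP => E; move: cp; rewrite -E permK.
  by rewrite yP.
Qed.

Lemma kauer_fold L (G0 : bgraph T) : sec_ok L ->
  bg_iota G0 = io ->
  (forall q, q \in L -> forall k, k <= q.2 ->
     bg_sigma G0 (spow s k q.1) = s (spow s k q.1)) ->
  bg_sigma (foldl (@move T) G0 L) =
  (tprod (rev (map XA L)) * bg_sigma G0 * tprod (map YA L))%g.
Proof.
elim: L G0 => [|p L IH] G0 ok Hi Ha /=; first by rewrite mul1g mulg1.
have Ap := Ha p (mem_head _ _).
rewrite IH //.
- rewrite /= Hi /move_sigma !(path_agree Ap) // rev_cons -cats1 tprod_cat /= !mulg1.
  by rewrite !mulgA.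
- exact: sec_ok_cons ok.
- move=> q Hq k kq.
  have Aq : bg_sigma G0 (spow s k q.1) = s (spow s k q.1).
    by apply: Ha => //; rewrite in_cons Hq orbT.
  have [ya yb yc] := sec_avoid ok Ap Hq kq Aq.
  by rewrite /= Hi move_sigma_other.
Qed.

Lemma kauer_mult L (G0 : bgraph T) : (forall x, bg_mult G0 x = 1%N) ->
  forall x, bg_mult (foldl (@move T) G0 L) x = 1%N.
Proof.
elim: L G0 => [|p L IH] G0 M //=; apply: IH => x /=.
by rewrite /move_mult; case: ifP => _; rewrite M.
Qed.

Lemma kauer_iota L (G0 : bgraph T) : bg_iota (foldl (@move T) G0 L) = bg_iota G0.
Proof. by elim: L G0 => [|p L IH] G0 //=; rewrite IH. Qed.

Lemma max_sectors_ok : sec_ok (max_sectors P s).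
Proof.
split; first by move=> p; rewrite mem_max_sectors.
  exact: max_sectors_uniq.
move=> [h r] [h' r'] /=; rewrite !mem_max_sectors /= => M M' i j ir jr E.
by have [-> ->] := max_disjoint M M' ir jr E.
Qed.
End Fold.

Section GFold.
Variables (H : finType) (n : nat) (P : {set H}) (io s : {perm H}) (d : H -> 'Zm n).
Local Notation csig := (@cov_sigma H n).
Hypothesis Hio : forall x, (io x \in P) = (x \in P).

Definition XL (p : H * nat) := Xp io s d p.1 p.2.
Definition YL (p : H * nat) := Yp s d p.1 p.2.

Lemma Dsum_agree (s' : {perm H}) (d' : H -> 'Zm n) h r :
  (forall k, k <= r -> s' (spow s k h) = s (spow s k h) /\ d' (spow s k h) = d (spow s k h)) ->
  forall k, k <= r.+1 -> Dsum s' d' h k = Dsum s d h k.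
Proof.
move=> A k kr; rewrite /Dsum; apply: eq_bigr => j _.
have jr : j <= r by have := ltn_ord j; lia.
rewrite (path_agree (s := s) (s' := s') (r := r)) ?(A j jr).2 //; last lia.
by move=> k' /A [].
Qed.

Lemma gkauer_fold L (G0 : gbgraph H n) : sec_ok P s L ->
  gb_iota G0 = io ->
  (forall q, q \in L -> forall k, k <= q.2 ->
     gb_sigma G0 (spow s k q.1) = s (spow s k q.1) /\
     gb_deg G0 (spow s k q.1) = d (spow s k q.1)) ->
  csig (gb_sigma (foldl (@gmove H n) G0 L)) (gb_deg (foldl (@gmove H n) G0 L)) =
  (tprod (flatten (rev (map XL L))) * csig (gb_sigma G0) (gb_deg G0)
     * tprod (flatten (map YL L)))%g.
Proof.
elim: L G0 => [|p L IH] G0 ok Hi Ha /=; first by rewrite mul1g mulg1.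
have Ap := Ha p (mem_head _ _).
have Aps : forall k, k <= p.2 -> gb_sigma G0 (spow s k p.1) = s (spow s k p.1).
  by move=> k /Ap [].
have [okA /andP[pL U] okD] := ok.
have /andP[Sp cp] := okA p (mem_head _ _).
rewrite IH //.
- rewrite /= Hi single_move; last first.
    rewrite !(path_agree Aps) //; apply/eqP => E.
    by have := sector_in Sp (leq0n p.2); rewrite /spow /= E (negbTE (sector_out Sp)).
  rewrite !(path_agree Aps) //; apply/eqP => E.
    have := sector_in Sp (leqnn p.2); rewrite E Hio.
    by rewrite (negbTE (sector_out Sp)).
  rewrite /Xp /Yp !(path_agree Aps) // !(Dsum_agree Ap) //.
  rewrite rev_cons -cats1 flatten_cat tprod_cat /= cats0 tprod_cat.
  by rewrite !mulgA.
- exact: sec_ok_cons ok.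
- move=> q Hq k kq.
  have [Aq Dq] : gb_sigma G0 (spow s k q.1) = s (spow s k q.1) /\
                 gb_deg G0 (spow s k q.1) = d (spow s k q.1).
    by apply: Ha => //; rewrite in_cons Hq orbT.
  have [ya yb yc] := sec_avoid Hio ok Aps Hq kq Aq.
  rewrite /= Hi move_sigma_other // move_deg_other //.
  by apply: contra yc => /eqP ->; rewrite permKV.
Qed.

Lemma gkauer_iota L (G0 : gbgraph H n) : gb_iota (foldl (@gmove H n) G0 L) = gb_iota G0.
Proof. by elim: L G0 => [|p L IH] G0 //=; rewrite IH. Qed.
End GFold.

Section Good.
Variables (T : finType) (I : eqType) (U : finType).

Lemma good_map (L : seq I) (al be : I -> T) :
  uniq L -> {in L &, injective al} -> {in L &, injective be} ->
  (forall p q, p \in L -> q \in L -> al p != be q) ->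
  good [seq (al p, be p) | p <- L].
Proof.
move=> UL ia ib ab; apply: good_of.
- by rewrite map_inj_in_uniq // => p q Hp Hq [] /(ia p q Hp Hq).
- move=> x y /mapP[p Hp ->] /mapP[q Hq ->] ne.
  have pq : p != q by apply: contraNneq ne => ->.
  rewrite /pdisj /= (ab p q Hp Hq) (eq_sym (be p)) (ab q p Hq Hp) /=.
  by rewrite (contra_neq (ia p q Hp Hq) pq) (contra_neq (ib p q Hp Hq) pq).
- by move=> x /mapP[p Hp ->] /=; apply: ab.
Qed.

Lemma good_allpairs (L : seq I) (al be : I -> T) (f g : I -> U -> U) (E : seq U) :
  uniq L -> uniq E -> {in L &, injective al} -> {in L &, injective be} ->
  (forall p q, p \in L -> q \in L -> al p != be q) ->
  (forall p, injective (f p)) -> (forall p, injective (g p)) ->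
  good [seq ((al p, f p i), (be p, g p i)) | p <- L, i <- E].
Proof.
move=> UL UE ia ib ab fi gi; apply: good_of.
- apply: allpairs_uniq => // -[p i] [q j] /allpairsP[[p' i'] [Hp _ /= [E1 E2]]].
  move=> /allpairsP[[q' j'] [Hq _ /= [E3 E4]]]; subst p' i' q' j'.
  move=> /= [] /(ia _ _ Hp Hq) /= E5; subst q.
  by move=> /fi ->.
- move=> x y /allpairsP[[p i] [Hp _ /= ->]] /allpairsP[[q j] [Hq _ /= ->]] ne.
  rewrite /pdisj /= !xpair_eqE (negbTE (ab p q Hp Hq)) (eq_sym (be p)) (negbTE (ab q p Hq Hp)) /=.
  apply/andP; split.
    apply/negP => /andP[/eqP /(ia _ _ Hp Hq) /= E1]; subst q => /eqP /fi E2; subst j.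
    by rewrite eqxx in ne.
  apply/negP => /andP[/eqP /(ib _ _ Hp Hq) /= E1]; subst q => /eqP /gi E2; subst j.
  by rewrite eqxx in ne.
- by move=> x /allpairsP[[p i] [Hp _ /= ->]] /=; rewrite xpair_eqE (negbTE (ab p p Hp Hp)).
Qed.
End Good.

Section OkFacts.
Variables (T : finType) (P : {set T}) (io s : {perm T}).
Hypothesis Hio : forall x, (io x \in P) = (x \in P).
Variable L : seq (T * nat).
Hypothesis ok : sec_ok P s L.

Lemma ok_injA : {in L &, injective (fun p => spow s p.2 p.1)}.
Proof. by case: ok => _ _ D p q Hp Hq E; apply: (D p q Hp Hq p.2 q.2). Qed.
Lemma ok_injE : {in L &, injective (fun p => spow s p.2.+1 p.1)}.
Proof. by move=> p q Hp Hq /= /perm_inj; apply: ok_injA. Qed.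
Lemma ok_injB : {in L &, injective (fun p => io (spow s p.2.+1 p.1))}.
Proof. by move=> p q Hp Hq /= /perm_inj; apply: ok_injE. Qed.
Lemma ok_injF : {in L &, injective (fun p : T * nat => p.1)}.
Proof. by case: ok => _ _ D p q Hp Hq E; apply: (D p q Hp Hq 0 0). Qed.
Lemma ok_AB p q : p \in L -> q \in L -> spow s p.2 p.1 != io (spow s q.2.+1 q.1).
Proof.
case: ok => A _ _ Hp Hq; have /andP[Sp _] := A p Hp; have /andP[Sq _] := A q Hq.
apply/eqP => E; have := sector_in Sp (leqnn _); rewrite E Hio.
by rewrite (negbTE (sector_out Sq)).
Qed.
Lemma ok_FE p q : p \in L -> q \in L -> p.1 != spow s q.2.+1 q.1.
Proof.
case: ok => A _ _ Hp Hq; have /andP[Sp _] := A p Hp; have /andP[Sq _] := A q Hq.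
apply/eqP => E; have := sector_in Sp (leq0n p.2); rewrite /spow /= E.
by rewrite (negbTE (sector_out Sq)).
Qed.
End OkFacts.

Lemma bg_eq (T : finType) (G1 G2 : bgraph T) : bg_iota G1 = bg_iota G2 ->
  bg_sigma G1 = bg_sigma G2 -> bg_mult G1 =1 bg_mult G2 -> G1 = G2.
Proof.
case: G1 => i1 s1 m1; case: G2 => i2 s2 m2 /= -> -> E.
by rewrite (functional_extensionality _ _ E).
Qed.

Unset Implicit Arguments.
Theorem proposition2p19 (H : finType) (n : nat) (G : gbgraph H n) (H' : {set H}) :
  is_gbgraph G ->
  (forall h : H, (gb_iota G h \in H') = (h \in H')) ->
  covering (gkauer H' G) = kauer (lift_set n H') (covering G).
Proof.
move=> _ Hio.
set io := gb_iota G; set s := gb_sigma G; set d := gb_deg G.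
set L := max_sectors H' s.
set P := lift_set n H'.
set cs := @cov_sigma H n s d.
set ci := @cov_iota H n io.
set Lt := max_sectors P cs.
have okL : sec_ok H' s L := max_sectors_ok H' s.
have okLt : sec_ok P cs Lt := max_sectors_ok P cs.
have Hiot : forall x, (ci x \in P) = (x \in P).
  by move=> x; rewrite /ci cov_iotaE !inE /= Hio.
have memLt : forall h i r, (((h, i), r) \in Lt) = ((h, r) \in L).
  by move=> h i r; rewrite !mem_max_sectors /= lift_maxsec.
apply: bg_eq.
- by rewrite /kauer kauer_iota /= /gkauer gkauer_iota.
- rewrite /kauer /= (kauer_fold (P := P) (io := ci) (s := cs)) //; last first.
  rewrite /gkauer (gkauer_fold (P := H') (io := io) (s := s) (d := d)) //.
  apply/permP => z; rewrite !permM.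
  pose F (p : H * nat) (i : 'Zm n) :=
    ((spow s p.2 p.1, (i + Dsum s d p.1 p.2)%R), (io (spow s p.2.+1 p.1), (i + Dsum s d p.1 p.2.+1)%R)).
  pose K (p : H * nat) (i : 'Zm n) :=
    ((p.1, i), (spow s p.2.+1 p.1, (i + Dsum s d p.1 p.2.+1)%R)).
  have eXL : flatten (rev [seq XL io s d i | i <- L]) = [seq F p i | p <- rev L, i <- enum 'Zm n].
    by rewrite -map_rev.
  have eYL : flatten [seq YL s d i | i <- L] = [seq K p i | p <- L, i <- enum 'Zm n] by [].
  have XAE : forall h i r, XA ci cs ((h, i), r) = F (h, r) i.
    move=> h i r; rewrite /XA /= (_ : cs (spow cs r (h,i)) = spow cs r.+1 (h,i)) //.
    by rewrite /cs !cov_spow /ci cov_iotaE.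
  have YAE : forall h i r, YA cs ((h, i), r) = K (h, r) i.
    move=> h i r; rewrite /YA /= (_ : cs (spow cs r (h,i)) = spow cs r.+1 (h,i)) //.
    by rewrite /cs !cov_spow.
  have revin : forall (A : eqType) (l : seq A) (P0 : A -> A -> Prop),
      {in l &, forall p q, P0 p q} -> {in rev l &, forall p q, P0 p q}.
    by move=> A l P0 HP p q; rewrite !mem_rev; apply: HP.
  have okLt' : forall p q, p \in Lt -> q \in Lt -> _ := ok_AB Hiot okLt.
  have EXp : tprod (flatten (rev [seq XL io s d i | i <- L])) =1 tprod (rev [seq XA ci cs i | i <- Lt]).
  rewrite eXL; apply: tprod_eq.
  - have GA := (@good_allpairs _ _ _ (rev L) (fun p => spow s p.2 p.1) (fun p => io (spow s p.2.+1 p.1)) (fun p i => (i + Dsum s d p.1 p.2)%R) (fun p i => (i + Dsum s d p.1 p.2.+1)%R) (enum 'Zm n)). apply: GA; rewrite ?rev_uniq ?enum_uniq //.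
    + by case: okL.
    + by apply: revin; apply: ok_injA okL.
    + by apply: revin; apply: (ok_injB (io:=io) okL).
    + by move=> p q; rewrite !mem_rev; apply: (ok_AB Hio okL).
    + by move=> p; apply: addIr.
    + by move=> p; apply: addIr.
  - rewrite -map_rev; apply: good_map; rewrite ?rev_uniq.
    + by case: okLt.
    + by apply: revin; apply: ok_injA okLt.
    + by apply: revin; apply: (ok_injB (io:=ci) okLt).
    + by move=> p q; rewrite !mem_rev; apply: (ok_AB Hiot okLt).
  - move=> x; rewrite mem_rev; apply/allpairsP/mapP.
      move=> [[[h r] i] [/= Hp _ ->]]; exists ((h, i), r); first by rewrite memLt -mem_rev.
      by rewrite XAE.
    move=> [[[h i] r] Hq ->]; exists ((h, r), i); split => //=.
      by rewrite mem_rev -(memLt h i r).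
    by rewrite mem_enum.
  have EYp : tprod (flatten [seq YL s d i | i <- L]) =1 tprod [seq YA cs i | i <- Lt].
    rewrite eYL; apply: tprod_eq.
    - have GA := @good_allpairs _ _ _ L (fun p => p.1) (fun p => spow s p.2.+1 p.1) (fun p i => i) (fun p i => (i + Dsum s d p.1 p.2.+1)%R) (enum 'Zm n).
      apply: GA; rewrite ?enum_uniq //.
      + by case: okL.
      + exact: ok_injF okL.
      + exact: ok_injE okL.
      + move=> p q; exact: (ok_FE okL).
      + by move=> p ? ?.
      + by move=> p; apply: addIr.
    - apply: good_map.
      + by case: okLt.
      + exact: ok_injF okLt.
      + exact: ok_injE okLt.
      + move=> p q; exact: (ok_FE okLt).
    - move=> x; apply/allpairsP/mapP.
        move=> [[[h r] i] [/= Hp _ ->]]; exists ((h, i), r); first by rewrite memLt.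
        by rewrite YAE.
      move=> [[[h i] r] Hq ->]; exists ((h, r), i); split => //=.
        by rewrite -(memLt h i r).
      by rewrite mem_enum.
  by rewrite EXp EYp.
- move=> x; rewrite /kauer kauer_mult //.
Qed.
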